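(* Let $\lambda=\bar p/(1-\bar p)$. For every distribution $\eta$ on $\mathcal R$, $\lim_{n\to\infty}E_\eta[S_n]/n=\lambda$. Moreover there exist constants $c_1,c_2>0$ such that for every $n\in\mathbb N$ and every distribution $\eta$ on $\mathcal R$, $$\big|E_\eta[S_n]-\lambda n-\eta\cdot\mathbf r\big|\le c_1e^{-c_2n},\qquad\text{where } \mathbf r=\Big(I-K+\frac{(\mathbf 1-\mathbf p)\mu D_{1-p}K}{1-\bar p}\Big)^{-1}\mathbf p-\lambda\mathbf 1.$$
   Context: Let $\mathcal R=\{1,\dots,N\}$ and let $K$ be a stochastic matrix on $\mathcal R$ whose Markov chain has a unique closed irreducible subset; let $\mu$ (row vector) be its unique stationary distribution. Fix $p:\mathcal R\to(0,1)$, $\mathbf p=(p(1),\dots,p(N))^t$, $\mathbf 1$ the all-ones column vector, $I$ the identity, $D_p$ the diagonal matrix with entries $p(i)$, $D_{1-p}=I-D_p$, $\bar p=\mu\cdot\mathbf p$. Under $P_\eta$, $(R_j)_{j\ge1}$ is a Markov chain with transition matrix $K$ and $R_1\sim\eta$, and given $(R_j)$ the $\xi(j)$, $j\ge1$, are independent Bernoulli$(p(R_j))$ (a ''success'' if $\xi(j)=1$, ''failure'' otherwise). $S_n=\inf\{k\ge0:\sum_{j=1}^{k+n}(1-\xi(j))=n\}$ is the number of successes before the $n$-th failure. (Equivalently $E_\eta[S_n]$ is the mean of one step $U_1$ of the forward branching-like process started from $U_0=n$.) *)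

(* Defs.v *)
From HB Require Import structures.
From mathcomp Require Import all_boot all_order all_algebra.
From mathcomp Require Import all_classical all_reals all_analysis.
Set Implicit Arguments. Unset Strict Implicit. Unset Printing Implicit Defensive.
Import Order.TTheory GRing.Theory Num.Theory.
Local Open Scope ring_scope.

Section Defs.
Variables (R : realType) (N : nat).

Definition stochastic (K : 'M[R]_N) : Prop :=
  (forall i j, 0 <= K i j) /\ (forall i, \sum_j K i j = 1).

Definition is_distr (eta : 'rV[R]_N) : Prop :=
  (forall i, 0 <= eta 0 i) /\ \sum_i eta 0 i = 1.

Definition closed_set (K : 'M[R]_N) (C : {set 'I_N}) : Prop :=
  (exists i, i \in C) /\ forall i j, i \in C -> 0 < K i j -> j \in C.

Definition closed_irreducible (K : 'M[R]_N) (C : {set 'I_N}) : Prop :=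
  closed_set K C /\
  forall i j, i \in C -> j \in C -> exists t : nat, 0 < (K ^+ t) i j.

Definition unique_closed_irreducible (K : 'M[R]_N) : Prop :=
  exists C, closed_irreducible K C /\
    forall C', closed_irreducible K C' -> C' = C.

Definition is_stationary (K : 'M[R]_N) (mu : 'rV[R]_N) : Prop :=
  is_distr mu /\ mu *m K = mu.

Definition pcol (p : 'I_N -> R) : 'cV[R]_N := \col_i p i.

Definition fails m (xi : {ffun 'I_m -> bool}) (j : nat) : nat :=
  \sum_(i < m | (i < j)%N) (~~ xi i : nat).

(* P_eta of the cylinder (R_1..R_m) = r, (xi(1)..xi(m)) = xi *)
Definition path_weight (K : 'M[R]_N) (p : 'I_N -> R) (eta : 'rV[R]_N) m
    (r : {ffun 'I_m -> 'I_N}) (xi : {ffun 'I_m -> bool}) : R :=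
  (\prod_(i : 'I_m) (if val i == 0%N then eta 0 (r i) else 1)) *
  (\prod_(i : 'I_m) \prod_(j : 'I_m | val j == (val i).+1) K (r i) (r j)) *
  (\prod_(i : 'I_m) (if xi i then p (r i) else 1 - p (r i))).

Definition prob_event (K : 'M[R]_N) (p : 'I_N -> R) (eta : 'rV[R]_N) m
    (E : {ffun 'I_m -> bool} -> bool) : R :=
  \sum_(r : {ffun 'I_m -> 'I_N}) \sum_(xi : {ffun 'I_m -> bool})
     path_weight K p eta r xi * (E xi)%:R.

(* P_eta(S_n = k), with S_n = inf{k >= 0 : sum_{j<=k+n} (1 - xi j) = n};
   the event only depends on the first n+k trials *)
Definition prob_S (K : 'M[R]_N) (p : 'I_N -> R) (eta : 'rV[R]_N) (n k : nat) : R :=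
  prob_event K p eta (fun xi : {ffun 'I_(n + k) -> bool} =>
    (fails xi (k + n) == n)%N && [forall k' : 'I_k, (fails xi (k' + n) != n)%N]).

Definition ES (K : 'M[R]_N) (p : 'I_N -> R) (eta : 'rV[R]_N) (n : nat) : \bar R :=
  (\sum_(0 <= k <oo) ((k%:R * prob_S K p eta n k)%:E))%E.

End Defs.

(* Main.v *)
Require Import Defs.
From HB Require Import structures.
From mathcomp Require Import all_boot all_order all_algebra.
From mathcomp Require Import all_classical all_reals all_analysis.
Set Implicit Arguments. Unset Strict Implicit. Unset Printing Implicit Defensive.
From mathcomp Require Import ring lra zify.
Import Order.TTheory GRing.Theory Num.Theory.
Import numFieldNormedType.Exports.
Local Open Scope ring_scope.
Section Core.
Variable R : realType.
Variable n' : nat.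
Local Notation N := n'.+1.
Variables (K : 'M[R]_N) (p : 'I_N -> R).
Hypothesis Kge0 : forall i j, 0 <= K i j.
Hypothesis Ksum : forall i, \sum_j K i j = 1.
Hypothesis p01 : forall i, 0 < p i < 1.

Definition one : 'cV[R]_N := const_mx 1.
Definition qcol : 'cV[R]_N := one - pcol p.
Definition Dp : 'M[R]_N := diag_mx (\row_i p i).
Definition Dq : 'M[R]_N := diag_mx (\row_i (1 - p i)).
Definition U := Dp *m K.
Definition F := Dq *m K.

Definition nnm m k (A : 'M[R]_(m,k)) := forall i j, 0 <= A i j.
Definition mxle m k (A B : 'M[R]_(m,k)) := forall i j, A i j <= B i j.

Lemma add_entry m k (A B : 'M[R]_(m,k)) i j : (A + B) i j = A i j + B i j.
Proof. by rewrite mxE. Qed.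
Lemma opp_entry m k (A : 'M[R]_(m,k)) i j : (- A) i j = - A i j.
Proof. by rewrite mxE. Qed.
Lemma sub_entry m k (A B : 'M[R]_(m,k)) i j : (A - B) i j = A i j - B i j.
Proof. by rewrite !mxE. Qed.
Lemma scale_entry m k (a : R) (A : 'M[R]_(m,k)) i j : (a *: A) i j = a * A i j.
Proof. by rewrite mxE. Qed.
Lemma one_entry i j : one i j = 1.
Proof. by rewrite mxE. Qed.

Lemma UE i j : U i j = p i * K i j.
Proof. by rewrite /U /Dp mul_diag_mx !mxE. Qed.
Lemma FE i j : F i j = (1 - p i) * K i j.
Proof. by rewrite /F /Dq mul_diag_mx !mxE. Qed.

Lemma p_gt0 i : 0 < p i. Proof. by case/andP: (p01 i). Qed.
Lemma p_lt1 i : p i < 1. Proof. by case/andP: (p01 i). Qed.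
Lemma q_gt0 i : 0 < 1 - p i. Proof. by rewrite subr_gt0 p_lt1. Qed.

Lemma U_ge0 : nnm U.
Proof. by move=> i j; rewrite UE mulr_ge0 // ltW // p_gt0. Qed.
Lemma F_ge0 : nnm F.
Proof. by move=> i j; rewrite FE mulr_ge0 // ltW // q_gt0. Qed.

Lemma K_one : K *m one = one.
Proof. by apply/matrixP=> i j; rewrite !mxE -[RHS](Ksum i); apply: eq_bigr => k _; rewrite mxE mulr1. Qed.

Lemma U_one : U *m one = pcol p.
Proof. by rewrite /U -mulmxA K_one; apply/matrixP=> i j; rewrite mul_diag_mx !mxE mulr1. Qed.
Lemma F_one : F *m one = qcol.
Proof. by rewrite /F -mulmxA K_one; apply/matrixP=> i j; rewrite mul_diag_mx !mxE mulr1. Qed.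

Lemma UF : U + F = K.
Proof. by apply/matrixP=> i j; rewrite mxE UE FE -mulrDl addrC subrK mul1r. Qed.

Lemma mul_nnm m k l (A : 'M[R]_(m,k)) (B : 'M[R]_(k,l)) : nnm A -> nnm B -> nnm (A *m B).
Proof. by move=> hA hB i j; rewrite mxE sumr_ge0 // => t _; rewrite mulr_ge0. Qed.

Lemma mxle_mull m k l (A : 'M[R]_(m,k)) (B B' : 'M[R]_(k,l)) :
  nnm A -> mxle B B' -> mxle (A *m B) (A *m B').
Proof. by move=> hA hB i j; rewrite !mxE ler_sum // => t _; apply: ler_wpM2l. Qed.

Lemma mxle_mulr m k l (A A' : 'M[R]_(m,k)) (B : 'M[R]_(k,l)) :
  nnm B -> mxle A A' -> mxle (A *m B) (A' *m B).
Proof. by move=> hB hA i j; rewrite !mxE ler_sum // => t _; apply: ler_wpM2r. Qed.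

Lemma mxle_trans m k (A B C : 'M[R]_(m,k)) : mxle A B -> mxle B C -> mxle A C.
Proof. by move=> h1 h2 i j; apply: le_trans (h1 i j) (h2 i j). Qed.

Lemma min_principle (y g : 'cV[R]_N) : y = U *m y + g -> nnm g -> nnm y.
Proof.
move=> hy hg.
have [i _ hmin] := @arg_minP _ R _ ord0 xpredT (fun i => y i 0) isT.
suff yi : 0 <= y i 0.
  by move=> j k; rewrite (ord1 k); apply: le_trans yi (hmin j isT).
have e : y i 0 = \sum_j U i j * y j 0 + g i 0 by rewrite {1}hy !mxE.
have h1 : p i * y i 0 <= \sum_j U i j * y j 0.
  rewrite -[p i]mulr1 -(Ksum i) mulr_sumr mulr_suml ler_sum // => j _.
  rewrite UE; apply: ler_wpM2l; first by rewrite mulr_ge0 ?Kge0 ?ltW ?p_gt0.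
  exact: hmin.
have : (1 - p i) * y i 0 >= 0.
  rewrite mulrBl mul1r subr_ge0; apply: le_trans h1 _.
  by rewrite e lerDl hg.
by rewrite pmulr_rge0 // q_gt0.
Qed.

Lemma kernel_unit (A : 'M[R]_N) : (forall y : 'cV_N, A *m y = 0 -> y = 0) -> A \in unitmx.
Proof.
move=> hk; rewrite unitmxE unitfE -det_tr; apply/negP => /det0P [v vn0 hv].
have : A *m v^T = 0 by rewrite -[A]trmxK -trmx_mul hv trmx0.
by move/hk => /(congr1 trmx); rewrite trmxK trmx0 => e; rewrite e eqxx in vn0.
Qed.

Lemma IU_unit : (1%:M - U) \in unitmx.
Proof.
apply: kernel_unit => y hy.
have e1 : y = U *m y + 0 by move: hy; rewrite mulmxBl mul1mx addr0 => /eqP; rewrite subr_eq0 => /eqP.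
have e2 : - y = U *m (- y) + 0 by rewrite mulmxN addr0 {1}e1 addr0.
have h1 := min_principle e1 (fun a b => ltac:(by rewrite mxE)).
have h2 := min_principle e2 (fun a b => ltac:(by rewrite mxE)).
apply/matrixP => i j; rewrite mxE; apply/eqP; rewrite eq_le h1 andbT.
by have := h2 i j; rewrite mxE oppr_ge0.
Qed.

Definition X := invmx (1%:M - U).
Lemma X_right : (1%:M - U) *m X = 1%:M. Proof. exact: mulmxV IU_unit. Qed.
Lemma X_left : X *m (1%:M - U) = 1%:M. Proof. exact: mulVmx IU_unit. Qed.
Lemma X_eq : X = 1%:M + U *m X.
Proof. by have := X_right; rewrite mulmxBl mul1mx => <-; rewrite subrK. Qed.

Lemma X_ge0 : nnm X.
Proof.
move=> i j.
pose e : 'cV[R]_N := delta_mx j 0.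
pose y : 'cV[R]_N := X *m e.
have hy : y = U *m y + e.
  by rewrite /y {1}X_eq mulmxDl mul1mx mulmxA addrC.
have he : nnm e by move=> a b; rewrite mxE; case: (_ && _).
have h := min_principle hy he.
have := h i 0.
rewrite /y /e mxE (bigD1 j) //= mxE !eqxx mulr1 big1 ?addr0 // => k /negbTE kj.
by rewrite mxE kj mulr0.
Qed.

Definition Q := X *m F.
Definition fv := X *m pcol p.

Lemma Q_ge0 : nnm Q. Proof. exact: mul_nnm X_ge0 F_ge0. Qed.
Lemma IU_one : (1%:M - U) *m one = qcol.
Proof. by rewrite mulmxBl mul1mx U_one. Qed.
Lemma X_qcol : X *m qcol = one.
Proof. by rewrite -IU_one mulmxA X_left mul1mx. Qed.
Lemma Q_one : Q *m one = one.
Proof. by rewrite /Q -mulmxA F_one X_qcol. Qed.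

Lemma X_ge_pow t : mxle (U ^+ t) X.
Proof.
have X1 : mxle 1%:M X.
  move=> i j; have e : (1%:M + U *m X) i j = 1%:M i j + (U *m X) i j by rewrite [LHS]mxE.
  rewrite X_eq e lerDl.
  exact: (mul_nnm U_ge0 X_ge0 i j).
elim: t => [|t IH]; first by rewrite expr0.
move=> i j; rewrite exprS -mulmxE.
apply: le_trans (mxle_mull U_ge0 IH i j) _.
have e : (1%:M + U *m X) i j = 1%:M i j + (U *m X) i j by rewrite [LHS]mxE.
rewrite [in Y in _ <= Y]X_eq e lerDr.
by rewrite mxE mulrn_wge0.
Qed.

Lemma psum_pos (f : 'I_N -> R) : 0 < \sum_j f j -> exists j, 0 < f j.
Proof.
move=> h; apply: contrapT => hn.
have hle : forall j, f j <= 0.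
  by move=> j; rewrite leNgt; apply/negP => hj; apply: hn; exists j.
have : \sum_j f j <= 0.
  by apply: le_trans (ler_sum _ (fun j _ => hle j)) _; rewrite big1.
by rewrite leNgt h.
Qed.

Lemma mul_gt0_inv (x y : R) : 0 <= x -> 0 <= y -> 0 < x * y -> 0 < x /\ 0 < y.
Proof.
move=> hx hy h; split; rewrite lt0r ?hx ?hy andbT; apply: contraTneq h => ->;
  by rewrite ?mul0r ?mulr0 ltxx.
Qed.

Lemma mul_pos (A B : 'M[R]_N) a b c : nnm A -> nnm B -> 0 < A a b -> 0 < B b c ->
  0 < (A *m B) a c.
Proof.
move=> hA hB h1 h2; rewrite mxE (bigD1 b) //=.
apply: ltr_wpDr; first by rewrite sumr_ge0 // => j _; rewrite mulr_ge0.
exact: mulr_gt0.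
Qed.

Definition supp_le (A B : 'M[R]_N) := forall i j, 0 < A i j -> 0 < B i j.

Lemma supp_mul A B A' B' : nnm A -> nnm B -> nnm A' -> nnm B' ->
  supp_le A A' -> supp_le B B' -> supp_le (A *m B) (A' *m B').
Proof.
move=> hA hB hA' hB' s1 s2 i k; rewrite mxE => /psum_pos [j hj].
have [h1 h2] := mul_gt0_inv (hA i j) (hB j k) hj.
exact: mul_pos hA' hB' (s1 _ _ h1) (s2 _ _ h2).
Qed.

Lemma Kpow_ge0 t : nnm (K ^+ t).
Proof.
elim: t => [|t IH]; first by move=> i j; rewrite expr0 mxE mulrn_wge0.
by rewrite exprS -mulmxE; apply: mul_nnm.
Qed.
Lemma Upow_ge0 t : nnm (U ^+ t).
Proof.
elim: t => [|t IH]; first by move=> i j; rewrite expr0 mxE mulrn_wge0.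
by rewrite exprS -mulmxE; apply: mul_nnm => //; exact: U_ge0.
Qed.

Lemma supp_KU : supp_le K U.
Proof. by move=> i j h; rewrite UE mulr_gt0 // p_gt0. Qed.
Lemma supp_KF : supp_le K F.
Proof. by move=> i j h; rewrite FE mulr_gt0 // q_gt0. Qed.

Lemma supp_pow t : supp_le (K ^+ t) (U ^+ t).
Proof.
elim: t => [|t IH]; first by rewrite !expr0.
rewrite !exprS -!mulmxE; apply: supp_mul => //;
  by [exact: U_ge0 | exact: Kpow_ge0 | exact: Upow_ge0 | exact: supp_KU].
Qed.

Lemma Q_pos t i c : 0 < (K ^+ t.+1) i c -> 0 < Q i c.
Proof.
rewrite exprSr -mulmxE => h.
have h2 : 0 < (U ^+ t *m F) i c.
  have := @supp_mul (K ^+ t) K (U ^+ t) F (Kpow_ge0 t) Kge0 (Upow_ge0 t) F_ge0 (@supp_pow t) supp_KF i c.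
  exact.
apply: lt_le_trans h2 _.
exact: mxle_mulr F_ge0 (X_ge_pow t) i c.
Qed.

Definition reach i j := exists t, 0 < (K ^+ t) i j.
Definition Rset i : {set 'I_N} := [set j | `[< reach i j >] ].
Lemma RsetP i j : reflect (reach i j) (j \in Rset i).
Proof. by rewrite inE; apply: asboolP. Qed.

Lemma reach_refl i : reach i i.
Proof. by exists 0%N; rewrite expr0 mxE eqxx ltr01. Qed.
Lemma reach_step i j : 0 < K i j -> reach i j.
Proof. by exists 1%N; rewrite expr1. Qed.
Lemma reach_trans a b c : reach a b -> reach b c -> reach a c.
Proof.
move=> [s hs] [t ht]; exists (s + t)%N; rewrite exprD -mulmxE.
exact: mul_pos (Kpow_ge0 s) (Kpow_ge0 t) hs ht.
Qed.

Lemma Krow_pos i : exists j, 0 < K i j.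
Proof. by apply: psum_pos; rewrite Ksum ltr01. Qed.

Lemma closed_Rset i : closed_set K (Rset i).
Proof.
split; first by exists i; apply/RsetP; exact: reach_refl.
move=> j l /RsetP hj hl; apply/RsetP; apply: reach_trans hj (reach_step hl).
Qed.

Lemma Rset_sub i j : j \in Rset i -> Rset j \subset Rset i.
Proof.
move=> /RsetP hj; apply/fintype.subsetP => k /RsetP hk; apply/RsetP; exact: reach_trans hj hk.
Qed.

Lemma exists_ci i : exists j, (Rset j \subset Rset i) /\ closed_irreducible K (Rset j).
Proof.
have ii : i \in Rset i by apply/RsetP; exact: reach_refl.
have [j jin jmin] := @arg_minnP _ i (fun j => j \in Rset i) (fun j => #|Rset j|) ii.
exists j; split; first exact: Rset_sub.
have back : forall k, k \in Rset j -> reach k j.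
  move=> k kin.
  have skj := Rset_sub kin.
  have kini : k \in Rset i by apply: (fintype.subsetP (Rset_sub jin)).
  have := jmin k kini => hle.
  have := geq_leqif (subset_leqif_cards skj).
  rewrite hle => /esym /eqP e.
  by apply/RsetP; rewrite e; apply/RsetP; exact: reach_refl.
split; first exact: closed_Rset.
move=> k l kin /RsetP lin; exact: reach_trans (back k kin) lin.
Qed.

Hypothesis Huci : unique_closed_irreducible K.

Lemma doeblin_c : exists c, forall i, exists t, 0 < (K ^+ t.+1) i c.
Proof.
have [C [[[[c cC] _] _] huniq]] := Huci.
exists c => i.
have [s hs] := Krow_pos i.
have [j [sub hci]] := exists_ci s.
have e := huniq _ hci.
have : c \in Rset s by apply: (fintype.subsetP sub); rewrite e.
move=> /RsetP [t ht]; exists t.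
by rewrite exprS -mulmxE; apply: mul_pos Kge0 (Kpow_ge0 t) hs ht.
Qed.


Lemma Q_rowsum i : \sum_j Q i j = 1.
Proof.
have := Q_one; move/matrixP/(_ i 0); rewrite /one !mxE => <-.
by apply: eq_bigr => j _; rewrite ?mxE mulr1.
Qed.

Lemma Q_le1 i j : Q i j <= 1.
Proof.
rewrite -(Q_rowsum i) (bigD1 j) //= lerDl sumr_ge0 // => k _; exact: Q_ge0.
Qed.

Variables (c : 'I_N) (delta : R).
Hypothesis delta_gt0 : 0 < delta.
Hypothesis delta_le : forall i, delta <= Q i c.

Lemma delta_le1 : delta <= 1.
Proof. exact: le_trans (delta_le c) (Q_le1 c c). Qed.

Lemma wsum_bounds (r : 'I_N -> R) (g : 'I_N -> R) a b :
  (forall j, 0 <= r j) -> (forall j, a <= g j <= b) ->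
  (\sum_j r j) * a <= \sum_j r j * g j <= (\sum_j r j) * b.
Proof.
move=> hr hg; rewrite !mulr_suml; apply/andP; split; apply: ler_sum => j _;
  apply: ler_wpM2l => //; by case/andP: (hg j).
Qed.

Lemma contract (g : 'cV[R]_N) a w : 0 <= w -> (forall j, a <= g j 0 <= a + w) ->
  exists a', forall i, a' <= (Q *m g) i 0 <= a' + (1 - delta) * w.
Proof.
move=> w0 hg; exists (delta * g c 0 + (1 - delta) * a) => i.
pose r j := Q i j - (j == c)%:R * delta.
have r0 : forall j, 0 <= r j.
  move=> j; rewrite /r; case: eqP => [->|_]; first by rewrite mul1r subr_ge0.
  by rewrite mul0r subr0 Q_ge0.
have rs : \sum_j r j = 1 - delta.
  rewrite /r sumrB Q_rowsum (bigD1 c) //= eqxx mul1r big1 ?addr0 //.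
  by move=> j /negbTE ->; rewrite mul0r.
have e : (Q *m g) i 0 = delta * g c 0 + \sum_j r j * g j 0.
  rewrite mxE /r.
  have -> : \sum_j (Q i j - (j == c)%:R * delta) * g j 0 =
            \sum_j Q i j * g j 0 - \sum_j (j == c)%:R * delta * g j 0.
    by rewrite -sumrB; apply: eq_bigr => j _; rewrite mulrBl.
  have ind : \sum_j (j == c)%:R * delta * g j 0 = delta * g c 0.
    rewrite (bigD1 c) //= eqxx mul1r big1 ?addr0 //.
    by move=> j /negbTE ->; rewrite !mul0r.
  by rewrite ind; ring.
have := wsum_bounds r0 hg; rewrite rs => /andP [h1 h2].
rewrite e; apply/andP; split; first by lra.
have : (1 - delta) * (a + w) = (1 - delta) * a + (1 - delta) * w by ring.
lra.
Qed.

Lemma pow_ge0_le (x y : R) k : 0 <= x -> x <= y -> x ^+ k <= y ^+ k.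
Proof.
move=> x0 xy; elim: k => [|k IH]; first by rewrite !expr0.
rewrite !exprS; apply: ler_pM => //; exact: exprn_ge0.
Qed.

Lemma contract_iter (g : 'cV[R]_N) a w : 0 <= w -> (forall j, a <= g j 0 <= a + w) ->
  forall k, exists a', forall i, a' <= (Q ^+ k *m g) i 0 <= a' + (1 - delta) ^+ k * w.
Proof.
move=> w0 hg; elim => [|k [a' IH]].
  by exists a => i; rewrite expr0 mul1mx mul1r.
have w'0 : 0 <= (1 - delta) ^+ k * w.
  by rewrite mulr_ge0 // exprn_ge0 // subr_ge0 delta_le1.
have [a'' h] := contract w'0 IH.
exists a'' => i; rewrite exprS -mulmxE -mulmxA exprS -mulrA.
exact: h i.
Qed.

Variable mu : 'rV[R]_N.
Hypothesis Hmu : is_stationary K mu.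

Lemma mu_ge0 j : 0 <= mu 0 j. Proof. by case: Hmu => [[h _] _]. Qed.
Lemma mu_sum : \sum_j mu 0 j = 1. Proof. by case: Hmu => [[_ h] _]. Qed.
Lemma muK : mu *m K = mu. Proof. by case: Hmu. Qed.

Definition pbar := (mu *m pcol p) 0 0.
Definition lam := pbar / (1 - pbar).
Definition nu : 'rV[R]_N := (1 - pbar)^-1 *: (mu *m Dq *m K).
Definition Mm := 1%:M - K + (1 - pbar)^-1 *: (qcol *m mu *m Dq *m K).

Lemma mu_qcol : (mu *m qcol) 0 0 = 1 - pbar.
Proof.
have e1 : (mu *m one) 0 0 = 1.
  by rewrite mxE -mu_sum; apply: eq_bigr => j _; rewrite mxE mulr1.
by rewrite /qcol mulmxBr [in LHS]mxE e1; congr (_ + _); rewrite mxE.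
Qed.

Lemma pbar_lt1 : 0 < 1 - pbar.
Proof.
rewrite -mu_qcol mxE.
have [j hj] : exists j, 0 < mu 0 j by apply: psum_pos; rewrite mu_sum ltr01.
rewrite (bigD1 j) //=; apply: ltr_wpDr.
  by rewrite sumr_ge0 // => k _; rewrite mulr_ge0 ?mu_ge0 // !mxE subr_ge0 ltW ?p_lt1.
by rewrite mulr_gt0 // !mxE q_gt0.
Qed.

Lemma muF : mu *m F = mu *m (1%:M - U).
Proof.
by rewrite mulmxBr mulmx1; apply/eqP; rewrite eq_sym subr_eq addrC -mulmxDr UF muK.
Qed.

Lemma nuE : nu = (1 - pbar)^-1 *: (mu *m F).
Proof. by rewrite /nu /F mulmxA. Qed.

Lemma nu_ge0 j : 0 <= nu 0 j.
Proof.
have mun : nnm mu by move=> a b; rewrite (ord1 a); exact: mu_ge0.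
have h := mul_nnm mun F_ge0 0 j.
move: h; rewrite nuE !mxE => h.
by rewrite mulr_ge0 // invr_ge0 ltW // pbar_lt1.
Qed.

Lemma nu_one : (nu *m one) 0 0 = 1.
Proof.
rewrite nuE -scalemxAl -mulmxA F_one mxE mu_qcol mulVf //.
by apply: lt0r_neq0; exact: pbar_lt1.
Qed.

Lemma nuQ : nu *m Q = nu.
Proof.
by rewrite nuE -scalemxAl /Q mulmxA muF -(mulmxA mu) X_right mulmx1 -muF.
Qed.

Lemma nu_Qpow k : nu *m Q ^+ k = nu.
Proof.
elim: k => [|k IH]; first by rewrite expr0 mulmx1.
by rewrite exprS -mulmxE mulmxA nuQ IH.
Qed.

Lemma nu_fv : (nu *m fv) 0 0 = lam.
Proof.
rewrite nuE -scalemxAl /fv mulmxA muF -(mulmxA mu) X_right mulmx1 mxE.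
by rewrite /lam mulrC.
Qed.

Lemma rowsumE (v : 'rV[R]_N) : (v *m one) 0 0 = \sum_j v 0 j.
Proof. by rewrite mxE; apply: eq_bigr => j _; rewrite /one mxE mulr1. Qed.

Lemma nu_avg (h : 'cV[R]_N) a b : (forall j, a <= h j 0 <= b) -> a <= (nu *m h) 0 0 <= b.
Proof.
move=> hb; have := wsum_bounds (fun j => nu_ge0 j) hb.
have -> : \sum_j nu 0 j = 1.
  by rewrite -nu_one rowsumE.
by rewrite !mul1r mxE.
Qed.

Lemma conv_bound (g : 'cV[R]_N) B : (forall j, `|g j 0| <= B) ->
  forall k i, `|(Q ^+ k *m g) i 0 - (nu *m g) 0 0| <= (1 - delta) ^+ k * (B + B).
Proof.
move=> hB k i.
have B0 : 0 <= B by apply: le_trans (hB 0) ; rewrite normr_ge0.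
have hg : forall j, - B <= g j 0 <= - B + (B + B).
  by move=> j; have := hB j; rewrite ler_norml => /andP [h1 h2]; apply/andP; split; lra.
have [a' ha] := contract_iter (addr_ge0 B0 B0) hg k.
have hn := nu_avg ha; rewrite mulmxA nu_Qpow in hn.
have := ha i; move: hn; set W := _ * (B + B); move=> /andP [h1 h2] /andP [h3 h4].
by rewrite ler_norml; apply/andP; split; lra.
Qed.


Lemma IK_fact : 1%:M - K = (1%:M - U) *m (1%:M - Q).
Proof. by rewrite mulmxBr mulmx1 /Q mulmxA X_right mul1mx -UF opprD addrA. Qed.

Lemma pbar_neq0 : 1 - pbar != 0.
Proof. by apply: lt0r_neq0; exact: pbar_lt1. Qed.

Lemma muM : mu *m Mm = (1 - pbar) *: nu.
Proof.
rewrite /Mm mulmxDr mulmxBr mulmx1 muK subrr add0r -scalemxAr !mulmxA.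
rewrite (mx11_scalar (mu *m qcol)) mu_qcol mul_scalar_mx.
by rewrite -!scalemxAl /nu !scalerA mulrC.
Qed.

Lemma Mm_split : Mm = (1%:M - K) + qcol *m nu.
Proof. by rewrite /Mm /nu -scalemxAr !mulmxA. Qed.

Lemma Mm_unit : Mm \in unitmx.
Proof.
apply: kernel_unit => y hy.
have nuy : nu *m y = 0.
  have : mu *m (Mm *m y) = 0 by rewrite hy mulmx0.
  rewrite mulmxA muM -scalemxAl => /eqP; rewrite scaler_eq0 (negbTE pbar_neq0) /=.
  by move/eqP.
have h1 : (1%:M - K) *m y = 0.
  by move: hy; rewrite Mm_split mulmxDl -mulmxA nuy mulmx0 addr0.
have h2 : (1%:M - Q) *m y = 0.
  have : X *m ((1%:M - K) *m y) = 0 by rewrite h1 mulmx0.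
  by rewrite IK_fact !mulmxA X_left mul1mx.
have yQ : Q *m y = y.
  by move/eqP: h2; rewrite mulmxBl mul1mx subr_eq0 => /eqP <-.
have [imax _ hmax] := @arg_maxP _ R _ ord0 xpredT (fun i => y i 0) isT.
have [imin _ hmin] := @arg_minP _ R _ ord0 xpredT (fun i => y i 0) isT.
set a := y imin 0; set w := y imax 0 - a.
have w0 : 0 <= w by rewrite subr_ge0; exact: hmin.
have hb : forall j, a <= y j 0 <= a + w.
  by move=> j; rewrite /w addrC subrK; apply/andP; split; [exact: hmin | exact: hmax].
have [a' ha] := contract w0 hb.
have := ha imax; have := ha imin; rewrite yQ => /andP [h3 h4] /andP [h5 h6].
have ww : w <= (1 - delta) * w.
  have e : w = y imax 0 - y imin 0 by [].
  rewrite {1}e; lra.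
have dw : delta * w <= 0 by lra.
have w00 : w = 0.
  by apply/eqP; rewrite eq_le w0 andbT -(pmulr_rle0 _ delta_gt0).
have yc : forall j, y j 0 = a.
  by move=> j; have := hb j; rewrite w00 addr0 => /andP [u v]; apply/eqP; rewrite eq_le u v.
have a0 : a = 0.
  have := nu_one; rewrite rowsumE => hs.
  move/matrixP: nuy => /(_ 0 0); rewrite mxE mxE.
  under eq_bigr do rewrite yc.
  by rewrite -mulr_suml hs mul1r.
apply/matrixP => i j; rewrite (ord1 j) mxE yc.
exact: a0.
Qed.

Definition xv := invmx Mm *m pcol p.
Definition rv := xv - lam *: one.

Lemma Mx : Mm *m xv = pcol p.
Proof. by rewrite /xv mulmxA (mulmxV Mm_unit) mul1mx. Qed.

Lemma nu_x : (nu *m xv) 0 0 = lam.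
Proof.
have : mu *m (Mm *m xv) = mu *m pcol p by rewrite Mx.
rewrite mulmxA muM -scalemxAl => /matrixP /(_ 0 0); rewrite scale_entry => e.
rewrite -/pbar in e.
rewrite /lam; apply: (mulfI pbar_neq0); rewrite e mulrCA mulfV ?mulr1 //.
exact: pbar_neq0.
Qed.

Lemma IQx : (1%:M - Q) *m xv = fv - lam *: one.
Proof.
have e : (1%:M - K) *m xv = pcol p - lam *: qcol.
  have := Mx; rewrite Mm_split mulmxDl -mulmxA (mx11_scalar (nu *m xv)) nu_x.
  by rewrite mul_mx_scalar => <-; rewrite addrK.
have : X *m ((1%:M - K) *m xv) = X *m (pcol p - lam *: qcol) by rewrite e.
rewrite IK_fact -!mulmxA (mulmxA X) X_left mul1mx => ->.
by rewrite mulmxBr -scalemxAr X_qcol.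
Qed.

Lemma IQrv : (1%:M - Q) *m rv = fv - lam *: one.
Proof.
by rewrite /rv mulmxBr IQx -scalemxAr mulmxBl mul1mx Q_one subrr scaler0 subr0.
Qed.

Lemma nu_rv : (nu *m rv) 0 0 = 0.
Proof.
by rewrite /rv mulmxBr -scalemxAr sub_entry scale_entry nu_x nu_one mulr1 subrr.
Qed.

Fixpoint ev k := if k is k'.+1 then fv + Q *m ev k' else 0.
Definition dv k := ev k - (lam * k%:R) *: one - rv.

Lemma Qrv : Q *m rv = rv - fv + lam *: one.
Proof.
have := IQrv; rewrite mulmxBl mul1mx => e.
apply/matrixP => i j; move/matrixP: e => /(_ i j).
rewrite !sub_entry scale_entry => e.
have er : rv i j = xv i j - lam * one i j by rewrite /rv sub_entry scale_entry.
rewrite add_entry sub_entry scale_entry; lra.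
Qed.

Lemma dv_rec k : dv k.+1 = Q *m dv k.
Proof.
rewrite /dv /= [Q *m (_ - rv)]mulmxBr Qrv [Q *m (_ - _)]mulmxBr -scalemxAr Q_one.
apply/matrixP => i j.
rewrite ?(sub_entry, add_entry, opp_entry, scale_entry) -natr1; ring.
Qed.

Lemma dv_pow k : dv k = Q ^+ k *m (- rv).
Proof.
elim: k => [|k IH].
  by rewrite expr0 mul1mx /dv /= mulr0 scale0r subr0 sub0r.
by rewrite dv_rec IH exprS -mulmxE mulmxA.
Qed.

Lemma main_bound : exists B, 0 <= B /\ forall k (eta : 'rV[R]_N), is_distr eta ->
  `|(eta *m ev k) 0 0 - (lam * k%:R + (eta *m rv) 0 0)| <= (1 - delta) ^+ k * (B + B).
Proof.
exists (\sum_j `|rv j 0|); split; first by rewrite sumr_ge0.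
move=> k eta [eta0 eta1].
have hB : forall j, `|(- rv) j 0| <= \sum_j `|rv j 0|.
  by move=> j; rewrite opp_entry normrN (bigD1 j) //= lerDl sumr_ge0.
have hc := conv_bound hB k.
have nz : (nu *m - rv) 0 0 = 0 by rewrite mulmxN opp_entry nu_rv oppr0.
have ee : ev k = dv k + (lam * k%:R) *: one + rv by apply/matrixP => i j; rewrite /dv ?(sub_entry, add_entry, opp_entry, scale_entry); ring.
have eone : (eta *m one) 0 0 = 1 by rewrite rowsumE.
have gen : forall (D : 'cV[R]_N) (s : R),
    (eta *m (D + s *: one + rv)) 0 0 = (eta *m D) 0 0 + s + (eta *m rv) 0 0.
  move=> D s; rewrite !mulmxDr -scalemxAr add_entry add_entry scale_entry eone mulr1.
  by [].
have key : (eta *m ev k) 0 0 - (lam * k%:R + (eta *m rv) 0 0) = (eta *m dv k) 0 0.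
  by rewrite ee gen; ring.
rewrite key.
have hD : forall i, `|dv k i 0| <= (1 - delta) ^+ k * (\sum_j `|rv j 0| + \sum_j `|rv j 0|).
  by move=> i; have := hc i; rewrite nz subr0 dv_pow.
move: hD; set W := _ * _; move: (dv k) => D hD.
rewrite mxE; apply: le_trans (ler_norm_sum _ _ _) _.
apply: le_trans (_ : \sum_j eta 0 j * W <= _); last by rewrite -mulr_suml eta1 mul1r.
apply: ler_sum => j _; rewrite normrM ger0_norm // ler_wpM2l //.
Qed.


Lemma bump0 i : bump 0 i = i.+1.
Proof. by rewrite /bump leq0n add1n. Qed.

Definition fcons (T : Type) m (a : T) (g : {ffun 'I_m -> T}) : {ffun 'I_m.+1 -> T} :=
  [ffun i => if unlift ord0 i is Some j then g j else a].

Lemma fcons0 T m (a : T) (g : {ffun 'I_m -> T}) : fcons a g ord0 = a.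
Proof. by rewrite ffunE unlift_none. Qed.
Lemma fconsS T m (a : T) (g : {ffun 'I_m -> T}) j : fcons a g (lift ord0 j) = g j.
Proof. by rewrite ffunE liftK. Qed.

Lemma sum_fcons (T : finType) m (G : {ffun 'I_m.+1 -> T} -> R) :
  \sum_f G f = \sum_a \sum_(g : {ffun 'I_m -> T}) G (fcons a g).
Proof.
rewrite pair_big /=.
rewrite (reindex (fun x : T * {ffun 'I_m -> T} => fcons x.1 x.2)) //=.
exists (fun f : {ffun 'I_m.+1 -> T} => (f ord0, [ffun j => f (lift ord0 j)])).
  move=> [a g] _ /=; rewrite fcons0; congr (_, _); apply/ffunP => j.
  by rewrite ffunE fconsS.
move=> f _ /=; apply/ffunP => i; rewrite ffunE.
by case: unliftP => [j ->|->]; rewrite ?ffunE.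
Qed.

Definition bern b a := if b then p a else 1 - p a.

Definition pwrest m (r : {ffun 'I_m -> 'I_N}) (xi : {ffun 'I_m -> bool}) : R :=
  (\prod_(i : 'I_m) \prod_(j : 'I_m | val j == (val i).+1) K (r i) (r j)) *
  (\prod_(i : 'I_m) bern (xi i) (r i)).

Lemma pw_rest m (eta : 'rV[R]_N) (r : {ffun 'I_m.+1 -> 'I_N}) xi :
  path_weight K p eta r xi = eta 0 (r ord0) * pwrest r xi.
Proof.
by rewrite /path_weight /pwrest big_ord_recl /= big1 ?mulr1 ?mulrA //.
Qed.

Lemma pwrest_fcons m a b (g : {ffun 'I_m.+1 -> 'I_N}) (x : {ffun 'I_m.+1 -> bool}) :
  pwrest (fcons a g) (fcons b x) = bern b a * K a (g ord0) * pwrest g x.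
Proof.
rewrite /pwrest big_ord_recl [in X in _ * X]big_ord_recl !fcons0.
have e1 : \prod_(j < m.+2 | val j == (val (ord0 : 'I_m.+2)).+1) K a (fcons a g j)
          = K a (g ord0).
  rewrite big_mkcond big_ord_recl /= mul1r.
  by rewrite big_ord_recl /= fconsS big1_eq mulr1.
have e2 : forall i : 'I_m.+1,
   \prod_(j < m.+2 | val j == (val (lift ord0 i)).+1) K (fcons a g (lift ord0 i)) (fcons a g j)
   = \prod_(j < m.+1 | val j == (val i).+1) K (g i) (g j).
  move=> i; rewrite big_mkcond big_ord_recl /= mul1r !bump0 [RHS]big_mkcond.
  by apply: eq_bigr => j _; rewrite /= bump0 eqSS !fconsS.
rewrite e1 (eq_bigr _ (fun i _ => e2 i)).
under [in X in _ * X]eq_bigr do rewrite !fconsS.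
rewrite /bern; ring.
Qed.

Lemma pwrest_fcons1 a b (g : {ffun 'I_0 -> 'I_N}) (x : {ffun 'I_0 -> bool}) :
  pwrest (fcons a g) (fcons b x) = bern b a.
Proof.
by rewrite /pwrest !big_ord1 big_mkcond big_ord1 /= mul1r !fcons0.
Qed.


Lemma fails_0 m (x : {ffun 'I_m -> bool}) : fails x 0 = 0%N.
Proof. by rewrite /fails big_pred0 // => i; rewrite ltn0. Qed.

Lemma fails_fconsS m b (x : {ffun 'I_m -> bool}) j :
  fails (fcons b x) j.+1 = ((~~ b) + fails x j)%N.
Proof.
rewrite /fails big_mkcond big_ord_recl /= fcons0; congr (_ + _)%N.
rewrite [RHS]big_mkcond; apply: eq_bigr => i _ /=.
by rewrite bump0 ltnS fconsS.
Qed.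

Lemma fcons_eta (T : Type) m (f : {ffun 'I_m.+1 -> T}) :
  f = fcons (f ord0) [ffun j => f (lift ord0 j)].
Proof.
apply/ffunP => i; rewrite ffunE.
by case: unliftP => [j ->|->]; rewrite ?ffunE.
Qed.

Lemma fails_le m (x : {ffun 'I_m -> bool}) j : (fails x j <= j)%N.
Proof.
elim: m x j => [|m IH] x j.
  by rewrite /fails big_ord0.
case: j => [|j]; first by rewrite fails_0.
rewrite (fcons_eta x) fails_fconsS.
have := IH [ffun j0 => x (lift ord0 j0)] j.
by case: (x ord0) => /=; lia.
Qed.

Definition Ev (n k m : nat) (xi : {ffun 'I_m -> bool}) : bool :=
  (fails xi (k + n) == n) && [forall k' : 'I_k, fails xi (k' + n) != n].

Lemma forall_ordS (P : nat -> bool) k :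
  [forall k' : 'I_k.+1, P k'] = P 0%N && [forall k' : 'I_k, P k'.+1].
Proof.
apply/forallP/andP => [h|[h0 /forallP h]].
  split; first exact: (h ord0).
  by apply/forallP => k'; have := h (lift ord0 k'); rewrite /= bump0.
move=> [[|j] hj] //=.
exact: (h (Ordinal (hj : (j < k)%N))).
Qed.

Lemma Ev0 k m (x : {ffun 'I_m -> bool}) : Ev 0 k.+1 x = false.
Proof. by rewrite /Ev (forall_ordS (fun t => fails x (t + 0) != 0%N)) /= fails_0 /= andbF. Qed.

Lemma EvT n k m (x : {ffun 'I_m -> bool}) : Ev n.+1 k.+1 (fcons true x) = Ev n.+1 k x.
Proof.
rewrite /Ev (forall_ordS (fun t => fails (fcons true x) (t + n.+1) != n.+1)).
rewrite addSn fails_fconsS add0n /= fails_fconsS add0n.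
have -> : (fails x n != n.+1) = true.
  by apply/negP => /eqP e; have := fails_le x n; rewrite e ltnn.
congr (_ && _); apply: eq_forallb => k'.
by rewrite addSn fails_fconsS add0n.
Qed.

Lemma EvT0 n m (x : {ffun 'I_m -> bool}) : Ev n.+1 0 (fcons true x) = false.
Proof.
rewrite /Ev add0n fails_fconsS add0n.
have -> : (fails x n == n.+1) = false.
  by apply/negP => /eqP e; have := fails_le x n; rewrite e ltnn.
by [].
Qed.

Lemma EvF n k m (x : {ffun 'I_m -> bool}) : Ev n.+1 k (fcons false x) = Ev n k x.
Proof.
rewrite /Ev addnS fails_fconsS add1n eqSS.
congr (_ && _); apply: eq_forallb => k'.
by rewrite addnS fails_fconsS add1n eqSS.
Qed.


Lemma sum_ffun0 (T : finType) (G : {ffun 'I_0 -> T} -> R) (f0 : {ffun 'I_0 -> T}) :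
  \sum_f G f = G f0.
Proof. by apply: big_pred1 => f /=; apply/esym/eqP/ffunP => [[]]. Qed.

Lemma swap3 (A B C : finType) (f : A -> B -> C -> R) :
  \sum_b \sum_c \sum_a f a b c = \sum_a \sum_b \sum_c f a b c.
Proof. by under eq_bigr do rewrite exchange_big; rewrite exchange_big. Qed.

Lemma pe_ext m (eta : 'rV[R]_N) (E1 E2 : {ffun 'I_m -> bool} -> bool) :
  E1 =1 E2 -> prob_event K p eta E1 = prob_event K p eta E2.
Proof.
move=> h; apply: eq_bigr => r _; apply: eq_bigr => x _; by rewrite h.
Qed.

Lemma pe_false m (eta : 'rV[R]_N) (E : {ffun 'I_m -> bool} -> bool) :
  E =1 (fun _ => false) -> prob_event K p eta E = 0.
Proof.
move=> h; rewrite /prob_event big1 // => r _; rewrite big1 // => x _.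
by rewrite h mulr0.
Qed.

Lemma pe_lin m (eta : 'rV[R]_N) (E : {ffun 'I_m.+1 -> bool} -> bool) :
  prob_event K p eta E =
  \sum_(g : {ffun 'I_m.+1 -> 'I_N}) \sum_(x : {ffun 'I_m.+1 -> bool})
     eta 0 (g ord0) * pwrest g x * (E x)%:R.
Proof. by apply: eq_bigr => g _; apply: eq_bigr => x _; rewrite pw_rest. Qed.

Lemma rowU (eta : 'rV[R]_N) b j :
  (eta *m (if b then U else F)) 0 j = \sum_a eta 0 a * (bern b a * K a j).
Proof. by rewrite mxE; apply: eq_bigr => a _; case: b; rewrite ?UE ?FE. Qed.

Lemma peel_b m (eta : 'rV[R]_N) (E : {ffun 'I_m.+2 -> bool} -> bool) b :
  prob_event K p (eta *m (if b then U else F)) (fun x => E (fcons b x)) =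
  \sum_a \sum_(g : {ffun 'I_m.+1 -> 'I_N}) \sum_(x : {ffun 'I_m.+1 -> bool})
     eta 0 a * (bern b a * K a (g ord0) * pwrest g x) * (E (fcons b x))%:R.
Proof.
rewrite pe_lin -swap3; apply: eq_bigr => g _; apply: eq_bigr => x _.
rewrite rowU !mulr_suml; apply: eq_bigr => a _; ring.
Qed.

Lemma peel m (eta : 'rV[R]_N) (E : {ffun 'I_m.+2 -> bool} -> bool) :
  prob_event K p eta E =
  prob_event K p (eta *m U) (fun x => E (fcons true x)) +
  prob_event K p (eta *m F) (fun x => E (fcons false x)).
Proof.
rewrite (peel_b eta E true) (peel_b eta E false) -!big_split /=.
rewrite /prob_event sum_fcons; apply: eq_bigr => a _.
rewrite -big_split /=; apply: eq_bigr => g _.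
rewrite sum_fcons big_bool /=; congr (_ + _);
  apply: eq_bigr => x _; by rewrite pw_rest fcons0 pwrest_fcons.
Qed.

Lemma pe_base (eta : 'rV[R]_N) (E : {ffun 'I_1 -> bool} -> bool) (x0 : {ffun 'I_0 -> bool}) :
  prob_event K p eta E = \sum_a \sum_b eta 0 a * bern b a * (E (fcons b x0))%:R.
Proof.
pose g0 : {ffun 'I_0 -> 'I_N} := [ffun i => ord0].
rewrite /prob_event sum_fcons; apply: eq_bigr => a _.
rewrite (sum_ffun0 _ g0) sum_fcons; apply: eq_bigr => b _.
by rewrite (sum_ffun0 _ x0) pw_rest fcons0 pwrest_fcons1.
Qed.

Fixpoint sv (n : nat) : nat -> 'cV[R]_N :=
  match n with
  | 0 => fun k => if k is 0 then one else 0
  | n1.+1 => fix sk k := match k with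
                        | 0 => F *m sv n1 0
                        | k1.+1 => U *m sk k1 + F *m sv n1 k1.+1
                        end
  end.

Lemma F_one_entry a : (F *m one) a 0 = 1 - p a.
Proof.
rewrite mxE; under eq_bigr do rewrite FE /one mxE mulr1.
by rewrite -mulr_sumr Ksum mulr1.
Qed.

Lemma probS_main m : forall n k (eta : 'rV[R]_N), (n + k = m.+1)%N ->
  prob_event K p eta (@Ev n k m.+1) = (eta *m sv n k) 0 0.
Proof.
elim: m => [|m IH] n k eta.
  case: n => [|[|n]] /= e.
  - have -> : k = 1%N by lia.
    by rewrite pe_false ?mulmx0 ?mxE // => x; rewrite Ev0.
  - have -> : k = 0%N by lia.
    rewrite (pe_base _ _ [ffun i => false]) mxE; apply: eq_bigr => a _.
    rewrite big_bool /Ev /= !add0n !fails_fconsS !fails_0 /= F_one_entry.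
    have -> : forall P : pred 'I_0, [forall k', P k'] = true.
      by move=> P; apply/forallP => [[]].
    by rewrite mulr0 add0r mulr1.
  - lia.
case: n => [|n] e.
  have [k' ->] : exists k', k = k'.+1 by exists k.-1; lia.
  by rewrite pe_false ?mulmx0 ?mxE // => x; rewrite Ev0.
rewrite peel.
rewrite (pe_ext _ (fun x => EvF n k x)) IH; last by lia.
case: k e => [|k] e.
  rewrite pe_false; last by move=> x; rewrite EvT0.
  by rewrite add0r /= mulmxA.
rewrite (pe_ext _ (fun x => EvT n k x)) IH; last by lia.
by rewrite /= mulmxDr !mulmxA add_entry.
Qed.

Lemma probS_eq n k (eta : 'rV[R]_N) : (0 < n + k)%N ->
  prob_S K p eta n k = (eta *m sv n k) 0 0.
Proof.
move=> h.
have -> : prob_S K p eta n k = prob_event K p eta (@Ev n k (n + k)) by [].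
have gen : forall M, (n + k)%N = M -> (0 < M)%N ->
    prob_event K p eta (@Ev n k M) = (eta *m sv n k) 0 0.
  by move=> [|M] e hM //; exact: probS_main e.
exact: gen (erefl _) h.
Qed.


Lemma sv_S0 n : sv n.+1 0 = F *m sv n 0. Proof. by []. Qed.
Lemma sv_SS n k : sv n.+1 k.+1 = U *m sv n.+1 k + F *m sv n k.+1. Proof. by []. Qed.

Lemma nnm_add m k (A B : 'M[R]_(m,k)) : nnm A -> nnm B -> nnm (A + B).
Proof. by move=> hA hB i j; rewrite add_entry; apply: addr_ge0; [exact: hA | exact: hB]. Qed.
Lemma mxle_add m k (A B C D : 'M[R]_(m,k)) : mxle A B -> mxle C D -> mxle (A + C) (B + D).
Proof. by move=> h1 h2 i j; rewrite !add_entry; apply: lerD; [exact: h1 | exact: h2]. Qed.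
Lemma nnm_sum L (V : nat -> 'cV[R]_N) : (forall k, nnm (V k)) -> nnm (\sum_(k < L) V k).
Proof. by move=> h i j; rewrite summxE; apply: sumr_ge0 => k _; exact: h. Qed.

Lemma sv_ge0 n k : nnm (sv n k).
Proof.
elim: n k => [|n IHn] k.
  by case: k => [|k] i j; rewrite mxE ?ler01.
elim: k => [|k IHk]; first by rewrite sv_S0; apply: mul_nnm F_ge0 (IHn 0%N).
rewrite sv_SS; apply: nnm_add; apply: mul_nnm => //; [exact: U_ge0 | exact: F_ge0].
Qed.

Definition Tn n L := \sum_(k < L) sv n k.
Definition Sn n L := \sum_(k < L) (k%:R : R) *: sv n k.

Lemma Tn_rec n L : Tn n.+1 L.+1 = U *m Tn n.+1 L + F *m Tn n L.+1.
Proof.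
rewrite /Tn big_ord_recl [in RHS]big_ord_recl sv_S0 mulmxDr !mulmx_sumr.
under eq_bigr do rewrite lift0 sv_SS.
rewrite big_split /= addrCA; congr (_ + (_ + _)); by apply: eq_bigr => i _; rewrite lift0.
Qed.

Lemma Sn_rec n L : Sn n.+1 L.+1 = U *m (Sn n.+1 L + Tn n.+1 L) + F *m Sn n L.+1.
Proof.
rewrite /Sn /Tn big_ord_recl [in RHS]big_ord_recl !scale0r !add0r.
under eq_bigr do rewrite lift0 sv_SS scalerDr !scalemxAr.
rewrite big_split /= -!mulmx_sumr -big_split /=; congr (_ + _); congr (_ *m _).
  by apply: eq_bigr => i _; rewrite -natr1 scalerDl scale1r.
all: by apply: eq_bigr => i _; rewrite lift0.
Qed.

Lemma Sn_S n L : Sn n L.+1 = Sn n L + L%:R *: sv n L.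
Proof. by rewrite /Sn big_ord_recr. Qed.

Lemma Tn0 L : Tn 0 L.+1 = one.
Proof. by rewrite /Tn big_ord_recl /= big1 ?addr0. Qed.
Lemma Sn0 L : Sn 0 L = 0.
Proof. by rewrite /Sn big1 // => [[[|k] hk]] _ /=; rewrite ?scale0r ?scaler0. Qed.

Lemma Tn_ge0 n L : nnm (Tn n L).
Proof. by apply: nnm_sum => k; exact: sv_ge0. Qed.
Lemma Sn_ge0 n L : nnm (Sn n L).
Proof.
apply: (@nnm_sum L (fun t => t%:R *: sv n t)) => k i j; rewrite scale_entry mulr_ge0 //; exact: sv_ge0.
Qed.

Lemma one_ge0 : nnm one. Proof. by move=> i j; rewrite one_entry ler01. Qed.

Lemma Tn_le1 n L : mxle (Tn n L) one.
Proof.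
elim: n L => [|n IHn] L.
  case: L => [|L]; last by rewrite Tn0 => i j.
  by move=> i j; rewrite /Tn big_ord0 mxE one_entry ler01.
elim: L => [|L IHL].
  by move=> i j; rewrite /Tn big_ord0 mxE one_entry ler01.
rewrite Tn_rec -K_one -UF mulmxDl.
apply: mxle_add; apply: mxle_mull => //; [exact: U_ge0 | exact: F_ge0].
Qed.

Lemma ev_ge0 n : nnm (ev n).
Proof.
elim: n => [|n IH] /=; first by move=> i j; rewrite mxE.
apply: nnm_add; last by apply: mul_nnm IH; exact: Q_ge0.
apply: mul_nnm; first exact: X_ge0.
by move=> i j; rewrite mxE ltW // p_gt0.
Qed.

Lemma ev_fix n : ev n.+1 = U *m (ev n.+1 + one) + F *m ev n.
Proof.
have e : (1%:M - U) *m ev n.+1 = pcol p + F *m ev n.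
  by rewrite /= /fv /Q -mulmxA -mulmxDr mulmxA X_right mul1mx.
move: (ev n.+1) (ev n) e => E E0 e.
rewrite mulmxDr U_one; move: e; rewrite mulmxBl mul1mx => e.
apply/matrixP => i j; move/matrixP: e => /(_ i j).
rewrite !(add_entry, sub_entry) ?opp_entry => e; lra.
Qed.

Lemma Sn_le n L : mxle (Sn n L) (ev n).
Proof.
elim: n L => [|n IHn] L.
  by rewrite Sn0 => i j; rewrite /= !mxE.
elim: L => [|L IHL].
  by move=> i j; rewrite /Sn big_ord0 mxE; exact: ev_ge0.
rewrite Sn_rec [in X in mxle _ X]ev_fix.
apply: mxle_add; apply: mxle_mull => //; [exact: U_ge0 | | exact: F_ge0].
exact: mxle_add (Tn_le1 _ _).
Qed.

Lemma Tn_mono n L : mxle (Tn n L) (Tn n L.+1).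
Proof.
by move=> i j; rewrite /Tn big_ord_recr add_entry lerDl; exact: sv_ge0.
Qed.
Lemma Sn_mono n L : mxle (Sn n L) (Sn n L.+1).
Proof.
move=> i j; rewrite /Sn big_ord_recr add_entry lerDl scale_entry mulr_ge0 //.
exact: sv_ge0.
Qed.

Definition cvgv (V : nat -> 'cV[R]_N) (v : 'cV[R]_N) :=
  forall i, ((fun L => V L i 0) @ \oo --> v i 0)%classic.

Lemma cvg_finsum (f : 'I_N -> nat -> R) (l : 'I_N -> R) :
  (forall j, (f j @ \oo --> l j)%classic) ->
  ((fun L => \sum_j f j L) @ \oo --> \sum_j l j)%classic.
Proof.
move=> h.
have : ((\sum_j f j) @ \oo --> \sum_j l j)%classic.
  apply: (big_ind2 (fun (u : nat -> R) (x : R) => (u @ \oo --> x)%classic)) => //.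
    exact: cvg_cst.
  by move=> u x v y hu hv; exact: cvgD.
by rewrite fct_sumE.
Qed.

Lemma cvgv_mul (A : 'M[R]_N) V v : cvgv V v -> cvgv (fun L => A *m V L) (A *m v).
Proof.
move=> h i; rewrite mxE.
have := @cvg_finsum (fun j L => A i j * V L j 0) (fun j => A i j * v j 0).
move=> H; apply: cvg_trans _ (H _); last by move=> j; apply: cvgM; [exact: cvg_cst | exact: h].
by apply: near_eq_cvg; near=> L; rewrite mxE.
Unshelve. all: by end_near.
Qed.

Lemma cvgv_add V W v w : cvgv V v -> cvgv W w -> cvgv (fun L => V L + W L) (v + w).
Proof.
move=> h1 h2 i; rewrite add_entry.
have -> : (fun L => (V L + W L) i 0) = (fun L => V L i 0) + (fun L => W L i 0).
  by apply: funext => L; rewrite add_entry.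
exact: cvgD.
Qed.

Lemma cvgv_shift V v : cvgv V v -> cvgv (fun L => V L.+1) v.
Proof. by move=> h i; have := h i; rewrite -cvg_shiftS. Qed.

Lemma cvgv_uniq V v w : cvgv V v -> cvgv V w -> v = w.
Proof.
move=> h1 h2; apply/matrixP => i j; rewrite (ord1 j).
exact: cvg_unique (h1 i) (h2 i).
Qed.

Lemma cvgv_ext V W v : (forall L, V L = W L) -> cvgv V v -> cvgv W v.
Proof. by move=> e h; have -> : W = V by apply: funext => L; rewrite e. Qed.

Lemma mono_cvgv (V : nat -> 'cV[R]_N) B :
  (forall L, mxle (V L) (V L.+1)) -> (forall L, mxle (V L) B) -> exists v, cvgv V v.
Proof.
move=> hm hb.
exists (\col_i sup (range (fun L => V L i 0))) => i; rewrite mxE.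
apply: nondecreasing_cvgn.
  by apply/nondecreasing_seqP => L; exact: hm.
by exists (B i 0) => x [L _ <-]; exact: hb.
Qed.

Lemma cvg_Tn n : cvgv (Tn n) one.
Proof.
elim: n => [|n IH].
  apply: (cvgv_ext (V := fun L => if L is 0 then Tn 0 0 else one)).
    by case=> [|L] //; rewrite Tn0.
  by move=> i; rewrite -cvg_shiftS /=; exact: cvg_cst.
have [t ht] := mono_cvgv (@Tn_mono n.+1) (@Tn_le1 n.+1).
suff -> : one = t by [].
have h1 := cvgv_shift ht.
have h2 : cvgv (fun L => Tn n.+1 L.+1) (U *m t + F *m one).
  apply: cvgv_ext; first by move=> L; rewrite Tn_rec.
  apply: cvgv_add; apply: cvgv_mul => //; exact: cvgv_shift.
have e := cvgv_uniq h1 h2.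
have : (1%:M - U) *m t = qcol by rewrite mulmxBl mul1mx {1}e addrAC subrr add0r F_one.
move=> e2; rewrite -X_qcol -e2 mulmxA X_left mul1mx //.
Qed.

Lemma cvg_Sn n : cvgv (Sn n) (ev n).
Proof.
elim: n => [|n IH].
  by apply: (cvgv_ext (V := fun _ => 0)); [move=> L; rewrite Sn0 | move=> i; rewrite /= mxE; exact: cvg_cst].
have [s hs] := mono_cvgv (@Sn_mono n.+1) (@Sn_le n.+1).
suff -> : ev n.+1 = s by [].
have h1 := cvgv_shift hs.
have h2 : cvgv (fun L => Sn n.+1 L.+1) (U *m (s + one) + F *m ev n).
  apply: cvgv_ext; first by move=> L; rewrite Sn_rec.
  apply: cvgv_add; apply: cvgv_mul => //; last exact: cvgv_shift.
  exact: cvgv_add (cvg_Tn n.+1).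
have e := cvgv_uniq h1 h2.
have e2 : (1%:M - U) *m s = pcol p + F *m ev n.
  by rewrite mulmxBl mul1mx {1}e mulmxDr U_one addrC !addrA addNr add0r.
have e3 : (1%:M - U) *m ev n.+1 = pcol p + F *m ev n.
  by rewrite /= /fv /Q -mulmxA -mulmxDr mulmxA X_right mul1mx.
by rewrite -[s]mul1mx -X_left -mulmxA e2 -e3 mulmxA X_left mul1mx.
Qed.

Lemma ES_eq n (eta : 'rV[R]_N) : ES K p eta n = ((eta *m ev n) 0 0)%:E.
Proof.
rewrite /ES.
have term : forall k, (k%:R * prob_S K p eta n k) = (eta *m Sn n k.+1) 0 0 - (eta *m Sn n k) 0 0.
  move=> k; rewrite -sub_entry Sn_S mulmxDr addrC addKr -scalemxAr scale_entry.
  case: k => [|k]; first by rewrite !mul0r.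
  by rewrite probS_eq //; lia.
have ps : forall L, \sum_(0 <= k < L) ((k%:R * prob_S K p eta n k)%:E) = ((eta *m Sn n L) 0 0)%:E.
  move=> L; rewrite sumEFin; congr (_%:E).
  under eq_bigr do rewrite term.
  have z : (0 : 'M[R]_(1,1)) 0 0 = 0 by rewrite mxE.
  by rewrite telescope_sumr // /Sn big_ord0 mulmx0 z subr0.
apply: cvg_lim => //.
under eq_fun do rewrite ps.
apply: cvg_EFin; first by near=> L.
rewrite /comp /=.
under eq_fun do rewrite mxE.
rewrite mxE; apply: cvg_finsum => j.
apply: cvgM; first exact: cvg_cst.
exact: (@cvg_Sn n j).
Unshelve. all: by end_near.
Qed.

End Core.

Unset Implicit Arguments.

Theorem proposition3p1 (R : realType) (N : nat) (K : 'M[R]_N)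
    (p : 'I_N -> R) (mu : 'rV[R]_N) :
  stochastic K -> unique_closed_irreducible K ->
  (forall i, 0 < p i < 1) -> is_stationary K mu ->
  let pbar := (mu *m pcol p) 0 0 in
  let lam := pbar / (1 - pbar) in
  let Dq := diag_mx (\row_i (1 - p i)) in
  let M := 1%:M - K + (1 - pbar)^-1 *: ((const_mx 1 - pcol p) *m mu *m Dq *m K) in
  let rv := invmx M *m pcol p - lam *: const_mx 1 in
  M \in unitmx /\
  (forall eta : 'rV[R]_N, is_distr eta ->
     ((fun n : nat => (ES K p eta n * (n%:R^-1)%:E)%E) @ \oo --> lam%:E)%classic) /\
  exists c1 c2 : R, 0 < c1 /\ 0 < c2 /\
    forall (n : nat) (eta : 'rV[R]_N), is_distr eta ->
      (`| ES K p eta n - (lam * n%:R + (eta *m rv) 0 0)%:E | <=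
         (c1 * expR (- (c2 * n%:R)))%:E)%E.
Proof.
move: K p mu; case: N => [|n'] K p mu.
  by move=> _ [C [[[[i _] _] _] _]]; case: i.
move=> [Kge0 Ksum] Huci p01 Hmu pbar lm Dq M rvv.
have elm : lm = lam p mu by [].
have erv : rvv = rv K p mu by [].
have eM : M = Mm K p mu by [].
rewrite eM erv elm; clear elm erv eM.
have [c hc] := doeblin_c Kge0 Ksum Huci.
have [i0 _ hmin] := @arg_minP _ R _ c xpredT (fun i => Q K p i c) isT.
set delta := Q K p i0 c.
have dgt0 : 0 < delta.
  have [t ht] := hc i0; rewrite /delta; exact: (Q_pos Kge0 Ksum p01 ht).
have dle : forall i, delta <= Q K p i c by move=> i; exact: hmin.
have d1 : delta <= 1 := delta_le1 Kge0 Ksum p01 dle.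
have [B [B0 hB]] := main_bound Kge0 Ksum p01 dgt0 dle Hmu.
have hES := ES_eq Kge0 Ksum p01 dgt0.
set L := lam p mu.
split; first exact: (Mm_unit Kge0 Ksum p01 dgt0 dle Hmu).
split.
  move=> eta heta.
  set a := fun n => (eta *m ev K p n) 0 0.
  set e := (eta *m rv K p mu) 0 0.
  set D := B + B + `|e|.
  have D0 : 0 <= D by rewrite /D; have := normr_ge0 e; lra.
  have bnd : forall n, (0 < n)%N ->
      L - (D + D) * harmonic n <= a n / n%:R <= L + (D + D) * harmonic n.
    move=> n n0.
    have h1 : `|a n - L * n%:R| <= D.
      have := hB n eta heta; rewrite -/e => h.
      have hp : (1 - delta) ^+ n <= 1 by apply: exprn_ile1; lra.
      have : (1 - delta) ^+ n * (B + B) <= B + B.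
        by rewrite -[leRHS]mul1r; apply: ler_wpM2r => //; lra.
      move: h; rewrite /D /a => h h'.
      have := ler_normB (a n - L * n%:R - e) (- e).
      rewrite normrN.
      have -> : a n - L * n%:R - e - - e = a n - L * n%:R by ring.
      rewrite /a; move: h h'.
      have -> : (eta *m ev K p n) 0 0 - (L * n%:R + e) = (eta *m ev K p n) 0 0 - L * n%:R - e by ring.
      lra.
    have r1 : 1 <= (n%:R : R) by rewrite ler1n.
    set r := (n%:R : R) in h1 r1 *.
    have hh : harmonic n = (r + 1)^-1 by rewrite /harmonic /= -natr1.
    rewrite hh.
    set u := r^-1; set w := (r + 1)^-1.
    have ru : r * u = 1 by rewrite /u mulfV //; apply: lt0r_neq0; lra.
    have rw : (r + 1) * w = 1 by rewrite /w mulfV //; apply: lt0r_neq0; lra.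
    have u0 : 0 < u by rewrite /u invr_gt0; lra.
    have w0 : 0 < w by rewrite /w invr_gt0; lra.
    have uw : 0 < u * w by apply: mulr_gt0.
    have hw : u <= 2 * w.
      have : u - 2 * w = (1 - r) * u * w.
        rewrite /u /w; field; apply/andP; split; apply: lt0r_neq0; lra.
      nra.
    have ex : a n / r - L = (a n - L * r) * u.
      rewrite /u; field; apply: lt0r_neq0; lra.
    have : `|a n / r - L| <= D * u.
      rewrite ex normrM (ger0_norm (ltW u0)); apply: ler_wpM2r => //; exact: ltW.
    rewrite ler_norml => /andP [l1 l2].
    have h3 : D * u <= (D + D) * w.
      have -> : (D + D) * w = D * (2 * w) by ring.
      by apply: ler_wpM2l.
    rewrite -/u in l1 l2; apply/andP; split; lra.
  have hlow : ((fun n => L - (D + D) * harmonic n) @ \oo --> L)%classic.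
    have := cvgB (cvg_cst L) (cvgM (cvg_cst (D + D)) (@cvg_harmonic R)).
    by rewrite mulr0 subr0 => h; apply: h; exact: eventually_filter.
  have hup : ((fun n => L + (D + D) * harmonic n) @ \oo --> L)%classic.
    have := cvgD (cvg_cst L) (cvgM (cvg_cst (D + D)) (@cvg_harmonic R)).
    by rewrite mulr0 addr0 => h; apply: h; exact: eventually_filter.
  have conv : ((fun n => a n / n%:R) @ \oo --> L)%classic.
    apply: (squeeze_cvgr _ hlow hup).
    near=> n; apply: bnd.
    by near: n; exists 1%N => // m /=.
  under eq_fun do rewrite hES -EFinM.
  apply: cvg_EFin; first by near=> n.
  exact: conv.
exists (B + B + 1), delta; split; first by lra.
split => // n eta heta.
rewrite hES -EFinB /= lee_fin.
apply: le_trans (hB n eta heta) _.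
have hp : (1 - delta) ^+ n <= expR (- (delta * n%:R)).
  have -> : - (delta * n%:R) = n%:R * (- delta) by ring.
  rewrite expRM_natl; apply: pow_ge0_le; first by lra.
  by have := expR_ge1Dx (- delta); lra.
have e0 : 0 <= (1 - delta) ^+ n by apply: exprn_ge0; lra.
have e1 : 0 < expR (- (delta * n%:R)) := expR_gt0 _.
nra.
Unshelve. all: by end_near.
Qed.
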